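(* Let $\lambda_1,\lambda_2,\mu>0$, $p_{12},p_{21}\in[0,1]$, $r_1,r_2,h_1,h_2\ge0$, $c_1,c_2\in\mathbb{R}$. For nonnegative integers $Q_1,Q_2$ define $$\pi^{(2)}(Q_1,Q_2)=\mu\Big[(r_1-c_1)Q_1+(r_2-c_2)Q_2-(r_1+h_1)E_{Q_1,Q_2}[m_1]-(r_2+h_2)E_{Q_1,Q_2}[m_2]\Big],$$ where $(m_1,m_2)$ has the stationary distribution of the inventory CTMC with random replenishment and order levels $(Q_1,Q_2)$. Then $\pi^{(2)}$ is submodular: for all integers $Q_1,Q_2\ge0$, $$\pi^{(2)}(Q_1+1,Q_2+1)-\pi^{(2)}(Q_1+1,Q_2)-\pi^{(2)}(Q_1,Q_2+1)+\pi^{(2)}(Q_1,Q_2)\le0.$$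
   Context: Inventory CTMC with random replenishment and order levels $(Q_1,Q_2)$: state space $\{0,\dots,Q_1\}\times\{0,\dots,Q_2\}$; demand transitions: from $(i_1,i_2)$ with $i_1,i_2\ge1$, to $(i_1-1,i_2)$ at rate $\lambda_1$ and to $(i_1,i_2-1)$ at rate $\lambda_2$; from $(i_1,0)$ with $i_1\ge1$, to $(i_1-1,0)$ at rate $s_1=\lambda_1+\lambda_2p_{21}$; from $(0,i_2)$ with $i_2\ge1$, to $(0,i_2-1)$ at rate $s_2=\lambda_2+\lambda_1p_{12}$; no demand transitions out of $(0,0)$; from every state a replenishment transition to $(Q_1,Q_2)$ at rate $\mu$. $r_i,c_i,h_i$ are the retail price, unit purchase cost, and end-of-period holding cost of product $i$. *)

(* Defs.v *)
From Stdlib Require Import Reals Lra Lia Arith.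
Open Scope R_scope.

Definition demand_rate (l1 l2 p12 p21 : R) (i1 i2 j1 j2 : nat) : R :=
  match i1, i2 with
  | S k1, S k2 =>
      (if andb (Nat.eqb j1 k1) (Nat.eqb j2 (S k2)) then l1 else 0) +
      (if andb (Nat.eqb j1 (S k1)) (Nat.eqb j2 k2) then l2 else 0)
  | S k1, O => if andb (Nat.eqb j1 k1) (Nat.eqb j2 0) then l1 + l2 * p21 else 0
  | O, S k2 => if andb (Nat.eqb j1 0) (Nat.eqb j2 k2) then l2 + l1 * p12 else 0
  | O, O => 0
  end.

Definition rate (l1 l2 mu p12 p21 : R) (Q1 Q2 i1 i2 j1 j2 : nat) : R :=
  if andb (Nat.eqb i1 j1) (Nat.eqb i2 j2) then 0
  else demand_rate l1 l2 p12 p21 i1 i2 j1 j2 +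
       (if andb (Nat.eqb j1 Q1) (Nat.eqb j2 Q2) then mu else 0).

Definition ssum (Q1 Q2 : nat) (f : nat -> nat -> R) : R :=
  sum_f_R0 (fun i => sum_f_R0 (fun j => f i j) Q2) Q1.

Definition stationary (l1 l2 mu p12 p21 : R) (Q1 Q2 : nat) (pi : nat -> nat -> R) : Prop :=
  (forall i j, (i <= Q1)%nat -> (j <= Q2)%nat -> 0 <= pi i j) /\
  ssum Q1 Q2 pi = 1 /\
  (forall j1 j2, (j1 <= Q1)%nat -> (j2 <= Q2)%nat ->
     pi j1 j2 * ssum Q1 Q2 (fun k1 k2 => rate l1 l2 mu p12 p21 Q1 Q2 j1 j2 k1 k2)
     = ssum Q1 Q2 (fun i1 i2 => pi i1 i2 * rate l1 l2 mu p12 p21 Q1 Q2 i1 i2 j1 j2)).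

Definition E_m1 (Q1 Q2 : nat) (pi : nat -> nat -> R) : R :=
  ssum Q1 Q2 (fun i j => INR i * pi i j).
Definition E_m2 (Q1 Q2 : nat) (pi : nat -> nat -> R) : R :=
  ssum Q1 Q2 (fun i j => INR j * pi i j).

Definition profit2 (mu r1 r2 c1 c2 h1 h2 : R) (Q1 Q2 : nat) (pi : nat -> nat -> R) : R :=
  mu * ((r1 - c1) * INR Q1 + (r2 - c2) * INR Q2
        - (r1 + h1) * E_m1 Q1 Q2 pi - (r2 + h2) * E_m2 Q1 Q2 pi).

(* Main.v *)
Require Import Defs.
From Stdlib Require Import Reals Lra Lia Arith Bool.
Open Scope R_scope.

Lemma ssum_ext Q1 Q2 f g : (forall i j, (i <= Q1)%nat -> (j <= Q2)%nat -> f i j = g i j) ->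
  ssum Q1 Q2 f = ssum Q1 Q2 g.
Proof. intros H. unfold ssum. apply sum_eq. intros i Hi. apply sum_eq. intros j Hj. auto. Qed.

Lemma ssum_plus Q1 Q2 f g : ssum Q1 Q2 (fun i j => f i j + g i j) = ssum Q1 Q2 f + ssum Q1 Q2 g.
Proof. unfold ssum. rewrite <- plus_sum. apply sum_eq. intros. apply plus_sum. Qed.

Lemma ssum_minus Q1 Q2 f g : ssum Q1 Q2 (fun i j => f i j - g i j) = ssum Q1 Q2 f - ssum Q1 Q2 g.
Proof. unfold ssum. rewrite <- minus_sum. apply sum_eq. intros. apply minus_sum. Qed.

Lemma ssum_scal Q1 Q2 c f : ssum Q1 Q2 (fun i j => c * f i j) = c * ssum Q1 Q2 f.
Proof. unfold ssum. rewrite scal_sum. apply sum_eq. intros. rewrite Rmult_comm, scal_sum.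
  apply sum_eq. intros. ring. Qed.

Lemma swap1 (F : nat -> nat -> R) n m :
  sum_f_R0 (fun i => sum_f_R0 (fun j => F i j) m) n =
  sum_f_R0 (fun j => sum_f_R0 (fun i => F i j) n) m.
Proof.
  induction n.
  - simpl. reflexivity.
  - simpl. rewrite IHn. rewrite <- plus_sum. reflexivity.
Qed.

Lemma ssum_swap Q1 Q2 P1 P2 (F : nat -> nat -> nat -> nat -> R) :
  ssum Q1 Q2 (fun i1 i2 => ssum P1 P2 (fun k1 k2 => F i1 i2 k1 k2)) =
  ssum P1 P2 (fun k1 k2 => ssum Q1 Q2 (fun i1 i2 => F i1 i2 k1 k2)).
Proof.
  unfold ssum.
  transitivity (sum_f_R0 (fun i1 => sum_f_R0 (fun k1 => sum_f_R0 (fun i2 =>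
     sum_f_R0 (fun k2 => F i1 i2 k1 k2) P2) Q2) P1) Q1).
  { apply sum_eq; intros. apply swap1. }
  rewrite swap1. apply sum_eq; intros.
  transitivity (sum_f_R0 (fun i1 => sum_f_R0 (fun k2 => sum_f_R0 (fun i2 =>
     F i1 i2 i k2) Q2) P2) Q1).
  { apply sum_eq; intros. apply swap1. }
  apply swap1.
Qed.

Lemma sum_zero n : sum_f_R0 (fun _ => 0) n = 0.
Proof. rewrite sum_cte. ring. Qed.

Lemma sum_delta1 c b n : (b <= n)%nat -> sum_f_R0 (fun j => if Nat.eqb j b then c else 0) n = c.
Proof.
  induction n; intros H.
  - simpl. replace b with 0%nat by lia. reflexivity.
  - change (sum_f_R0 (fun j => if Nat.eqb j b then c else 0) (S n)) with
      (sum_f_R0 (fun j => if Nat.eqb j b then c else 0) n + (if Nat.eqb (S n) b then c else 0)).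
    destruct (Nat.eqb_spec (S n) b).
    + subst. rewrite (sum_eq _ (fun _ => 0)). rewrite sum_zero. ring.
      intros i Hi. destruct (Nat.eqb_spec i (S n)); [lia|reflexivity].
    + rewrite IHn by lia. ring.
Qed.

Lemma ssum_delta Q1 Q2 a b c : (a <= Q1)%nat -> (b <= Q2)%nat ->
  ssum Q1 Q2 (fun k1 k2 => if andb (Nat.eqb k1 a) (Nat.eqb k2 b) then c else 0) = c.
Proof.
  intros Ha Hb. unfold ssum.
  rewrite (sum_eq _ (fun i => if Nat.eqb i a then c else 0)).
  - apply sum_delta1; auto.
  - intros i Hi. destruct (Nat.eqb i a); simpl.
    + apply sum_delta1; auto.
    + apply sum_zero.
Qed.

Fixpoint G (mu la lb s : R) (a : nat) : nat -> R :=
  match a with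
  | O => fun _ => 0
  | S a' => let ga := G mu la lb s a' in
      fix gb (b : nat) : R := match b with
        | O => (mu * INR (S a') + s * ga O) / (mu + s)
        | S b' => (mu * INR (S a') + la * ga (S b') + lb * gb b') / (mu + la + lb)
      end
  end.

Lemma G_0 mu la lb s b : G mu la lb s 0 b = 0.
Proof. reflexivity. Qed.

Lemma G_S0 mu la lb s a : 0 < mu + s ->
  (mu + s) * G mu la lb s (S a) 0 = mu * INR (S a) + s * G mu la lb s a 0.
Proof.
  intros H. change (G mu la lb s (S a) 0) with
    ((mu * INR (S a) + s * G mu la lb s a 0) / (mu + s)). field. lra.
Qed.

Lemma G_SS mu la lb s a b : 0 < mu + la + lb ->
  (mu + la + lb) * G mu la lb s (S a) (S b) =
  mu * INR (S a) + la * G mu la lb s a (S b) + lb * G mu la lb s (S a) b.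
Proof.
  intros H. change (G mu la lb s (S a) (S b)) with
    ((mu * INR (S a) + la * G mu la lb s a (S b) + lb * G mu la lb s (S a) b) / (mu + la + lb)).
  field. lra.
Qed.

Lemma pos_div c y z : 0 < c -> 0 <= z -> c * y = z -> 0 <= y.
Proof. intros. destruct (Rle_or_lt 0 y); [auto| nra]. Qed.

Lemma G_supermod mu la lb s : 0 < mu -> 0 < la -> 0 < lb -> la <= s ->
  forall a b, 0 <= G mu la lb s (S a) (S b) - G mu la lb s (S a) b
                  - G mu la lb s a (S b) + G mu la lb s a b.
Proof.
  intros Hmu Hla Hlb Hs.
  assert (Hc : 0 < mu + s) by lra.
  assert (HM : 0 < mu + la + lb) by lra.
  set (D := fun a b => G mu la lb s (S a) b - G mu la lb s a b).
  set (E := fun a b => D a (S b) - D a b).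
  assert (D_S0 : forall a, (mu + s) * D (S a) 0%nat = mu + s * D a 0%nat).
  { intros a. unfold D. rewrite Rmult_minus_distr_l, !G_S0 by lra.
    rewrite (S_INR (S a)). ring. }
  assert (D_00 : (mu + s) * D 0%nat 0%nat = mu).
  { unfold D. rewrite G_0, Rminus_0_r, G_S0 by lra. rewrite G_0. simpl. ring. }
  assert (D_SS : forall a c, (mu + la + lb) * D (S a) (S c) = mu + la * D a (S c) + lb * D (S a) c).
  { intros a c. unfold D. rewrite Rmult_minus_distr_l, !G_SS by lra.
    rewrite (S_INR (S a)). ring. }
  assert (D_0S : forall c, (mu + la + lb) * D 0%nat (S c) = mu + lb * D 0%nat c).
  { intros c. unfold D. rewrite !G_0, !Rminus_0_r, G_SS by lra. rewrite G_0. simpl. ring. }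
  assert (D00pos : 0 <= D 0%nat 0%nat) by (apply (pos_div (mu+s) _ mu); lra).
  assert (F : forall a, 0 <= D (S a) 0%nat - D a 0%nat).
  { induction a.
    - apply (pos_div (mu + s) _ (s * D 0%nat 0%nat)); [lra| apply Rmult_le_pos; lra|].
      rewrite Rmult_minus_distr_l, D_S0, D_00. ring.
    - apply (pos_div (mu + s) _ (s * (D (S a) 0%nat - D a 0%nat))); [lra| apply Rmult_le_pos; lra|].
      rewrite Rmult_minus_distr_l, !D_S0. ring. }
  assert (E0 : forall a, 0 <= E a 0%nat).
  { induction a.
    - apply (pos_div ((mu + s) * (mu + la + lb)) _ (mu * (s - la))); [nra| apply Rmult_le_pos; lra|].
      unfold E. transitivity ((mu+s)*((mu+la+lb)*D 0%nat 1%nat) - (mu+la+lb)*((mu+s)*D 0%nat 0%nat)); [ring|].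
      rewrite D_0S. transitivity ((mu+s)*mu + lb*((mu+s)*D 0%nat 0%nat) - (mu+la+lb)*((mu+s)*D 0%nat 0%nat)); [ring|]. rewrite D_00. ring.
    - apply (pos_div (mu + la + lb) _ ((s - la) * (D (S a) 0%nat - D a 0%nat) + la * E a 0%nat)); [lra| |].
      + specialize (F a). apply Rplus_le_le_0_compat; apply Rmult_le_pos; lra.
      + unfold E. rewrite Rmult_minus_distr_l, D_SS. specialize (D_S0 a). lra. }
  assert (Eall : forall b a, 0 <= E a b).
  { induction b.
    - exact E0.
    - induction a.
      + apply (pos_div (mu + la + lb) _ (lb * E 0%nat b)); [lra| apply Rmult_le_pos; [lra|apply IHb]|].
        unfold E. rewrite Rmult_minus_distr_l, !D_0S. ring.
      + apply (pos_div (mu + la + lb) _ (la * E a (S b) + lb * E (S a) b)); [lra| |].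
        * apply Rplus_le_le_0_compat; apply Rmult_le_pos; try lra; auto.
        * unfold E. rewrite Rmult_minus_distr_l, !D_SS. ring. }
  intros a b. specialize (Eall b a). unfold E, D in Eall. lra.
Qed.

Definition Dop (l1 l2 p12 p21 : R) (f : nat -> nat -> R) (i1 i2 : nat) : R :=
  match i1, i2 with
  | S a, S b => l1 * (f a (S b) - f i1 i2) + l2 * (f (S a) b - f i1 i2)
  | S a, O => (l1 + l2 * p21) * (f a O - f i1 i2)
  | O, S b => (l2 + l1 * p12) * (f O b - f i1 i2)
  | O, O => 0
  end.

Lemma rate_split l1 l2 mu p12 p21 Q1 Q2 f i1 i2 k1 k2 :
  rate l1 l2 mu p12 p21 Q1 Q2 i1 i2 k1 k2 * (f k1 k2 - f i1 i2) =
  demand_rate l1 l2 p12 p21 i1 i2 k1 k2 * (f k1 k2 - f i1 i2) +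
  (if andb (Nat.eqb k1 Q1) (Nat.eqb k2 Q2) then mu * (f Q1 Q2 - f i1 i2) else 0).
Proof.
  unfold rate. destruct (andb (Nat.eqb i1 k1) (Nat.eqb i2 k2)) eqn:E.
  - apply andb_true_iff in E. destruct E as [E1 E2].
    apply Nat.eqb_eq in E1. apply Nat.eqb_eq in E2. subst. destruct (Nat.eqb_spec k1 Q1), (Nat.eqb_spec k2 Q2); simpl; subst; ring.
  - destruct (Nat.eqb_spec k1 Q1), (Nat.eqb_spec k2 Q2); simpl; subst; ring.
Qed.

Lemma Lf l1 l2 mu p12 p21 Q1 Q2 f i1 i2 : (i1 <= Q1)%nat -> (i2 <= Q2)%nat ->
  ssum Q1 Q2 (fun k1 k2 => rate l1 l2 mu p12 p21 Q1 Q2 i1 i2 k1 k2 * (f k1 k2 - f i1 i2)) =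
  Dop l1 l2 p12 p21 f i1 i2 + mu * (f Q1 Q2 - f i1 i2).
Proof.
  intros H1 H2.
  rewrite (ssum_ext _ _ _ _ (fun k1 k2 _ _ => rate_split l1 l2 mu p12 p21 Q1 Q2 f i1 i2 k1 k2)).
  rewrite ssum_plus. rewrite ssum_delta by auto. f_equal.
  destruct i1 as [|a], i2 as [|b]; simpl.
  - rewrite (ssum_ext _ _ _ (fun _ _ => 0)); [| intros; ring].
    unfold ssum. rewrite (sum_eq _ (fun _ => 0)). apply sum_zero. intros; apply sum_zero.
  - rewrite <- (ssum_delta Q1 Q2 0 b ((l2 + l1 * p12) * (f 0%nat b - f 0%nat (S b)))) by lia.
    apply ssum_ext; intros k1 k2 _ _.
    destruct (Nat.eqb_spec k1 0), (Nat.eqb_spec k2 b); simpl; subst; ring.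
  - rewrite <- (ssum_delta Q1 Q2 a 0 ((l1 + l2 * p21) * (f a 0%nat - f (S a) 0%nat))) by lia.
    apply ssum_ext; intros k1 k2 _ _.
    destruct (Nat.eqb_spec k1 a), (Nat.eqb_spec k2 0); simpl; subst; ring.
  - rewrite <- (ssum_delta Q1 Q2 a (S b) (l1 * (f a (S b) - f (S a) (S b)))) by lia.
    rewrite <- (ssum_delta Q1 Q2 (S a) b (l2 * (f (S a) b - f (S a) (S b)))) by lia.
    rewrite <- ssum_plus.
    apply ssum_ext; intros k1 k2 _ _.
    destruct (Nat.eqb_spec k1 a), (Nat.eqb_spec k2 (S b)), (Nat.eqb_spec k1 (S a)), (Nat.eqb_spec k2 b);
      simpl; subst; try lia; ring.
Qed.

Lemma balance_zero l1 l2 mu p12 p21 Q1 Q2 pi f :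
  stationary l1 l2 mu p12 p21 Q1 Q2 pi ->
  ssum Q1 Q2 (fun i1 i2 => pi i1 i2 *
    ssum Q1 Q2 (fun k1 k2 => rate l1 l2 mu p12 p21 Q1 Q2 i1 i2 k1 k2 * (f k1 k2 - f i1 i2))) = 0.
Proof.
  intros [_ [_ Hb]].
  set (r := rate l1 l2 mu p12 p21 Q1 Q2).
  rewrite (ssum_ext _ _ _ (fun i1 i2 =>
     ssum Q1 Q2 (fun k1 k2 => pi i1 i2 * r i1 i2 k1 k2 * f k1 k2) -
     f i1 i2 * (pi i1 i2 * ssum Q1 Q2 (fun k1 k2 => r i1 i2 k1 k2)))).
  2: { intros i j _ _.
       rewrite (ssum_ext _ _ _ (fun k1 k2 => r i j k1 k2 * f k1 k2 - f i j * r i j k1 k2))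
         by (intros; ring).
       rewrite ssum_minus, ssum_scal.
       rewrite (ssum_ext _ _ (fun k1 k2 => pi i j * r i j k1 k2 * f k1 k2)
                  (fun k1 k2 => pi i j * (r i j k1 k2 * f k1 k2))) by (intros; ring).
       rewrite (ssum_scal _ _ (pi i j) (fun k1 k2 => r i j k1 k2 * f k1 k2)).
       change (ssum Q1 Q2 (r i j)) with (ssum Q1 Q2 (fun k1 k2 => r i j k1 k2)). ring. }
  rewrite ssum_minus.
  rewrite (ssum_ext _ _ (fun i1 i2 => f i1 i2 * (pi i1 i2 * ssum Q1 Q2 (fun k1 k2 => r i1 i2 k1 k2)))
     (fun i1 i2 => ssum Q1 Q2 (fun k1 k2 => f i1 i2 * (pi k1 k2 * r k1 k2 i1 i2)))).
  2: { intros i j Hi Hj. unfold r. rewrite Hb by auto. rewrite ssum_scal. reflexivity. }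
  rewrite (ssum_swap Q1 Q2 Q1 Q2 (fun i1 i2 k1 k2 => f i1 i2 * (pi k1 k2 * r k1 k2 i1 i2))).
  rewrite (ssum_ext _ _ (fun k1 k2 => ssum Q1 Q2 (fun i1 i2 => f i1 i2 * (pi k1 k2 * r k1 k2 i1 i2)))
    (fun i1 i2 => ssum Q1 Q2 (fun k1 k2 => pi i1 i2 * r i1 i2 k1 k2 * f k1 k2))).
  - ring.
  - intros; apply ssum_ext; intros; ring.
Qed.

Lemma stat_expect l1 l2 mu p12 p21 Q1 Q2 pi f u : 0 < mu ->
  stationary l1 l2 mu p12 p21 Q1 Q2 pi ->
  (forall i1 i2, Dop l1 l2 p12 p21 f i1 i2 = mu * f i1 i2 - mu * u i1 i2) ->
  ssum Q1 Q2 (fun i j => u i j * pi i j) = f Q1 Q2.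
Proof.
  intros Hmu HS HD.
  pose proof (balance_zero _ _ _ _ _ _ _ _ f HS) as Z.
  destruct HS as [_ [Hsum _]].
  rewrite (ssum_ext _ _ _ (fun i j => (mu * f Q1 Q2) * pi i j - mu * (u i j * pi i j))) in Z.
  2: { intros i j Hi Hj. rewrite Lf by auto. rewrite HD. ring. }
  rewrite ssum_minus, !ssum_scal, Hsum in Z.
  apply Rmult_eq_reg_l with mu; lra.
Qed.

Lemma Em1_eq l1 l2 mu p12 p21 Q1 Q2 pi : 0 < mu -> 0 < l1 -> 0 < l2 -> 0 <= p21 ->
  stationary l1 l2 mu p12 p21 Q1 Q2 pi ->
  E_m1 Q1 Q2 pi = G mu l1 l2 (l1 + l2 * p21) Q1 Q2.
Proof.
  intros Hmu H1 H2 Hp HS. unfold E_m1.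
  apply (stat_expect l1 l2 mu p12 p21); auto.
  intros [|a] [|b]; cbv beta iota delta [Dop]; rewrite ?G_0.
  - simpl. ring.
  - simpl. ring.
  - pose proof (G_S0 mu l1 l2 (l1 + l2 * p21) a) as E. assert (0 < mu + (l1 + l2*p21)) by nra.
    specialize (E H). lra.
  - pose proof (G_SS mu l1 l2 (l1 + l2 * p21) a b) as E. specialize (E ltac:(lra)). lra.
Qed.

Lemma Em2_eq l1 l2 mu p12 p21 Q1 Q2 pi : 0 < mu -> 0 < l1 -> 0 < l2 -> 0 <= p12 ->
  stationary l1 l2 mu p12 p21 Q1 Q2 pi ->
  E_m2 Q1 Q2 pi = G mu l2 l1 (l2 + l1 * p12) Q2 Q1.
Proof.
  intros Hmu H1 H2 Hp HS. unfold E_m2.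
  apply (stat_expect l1 l2 mu p12 p21 Q1 Q2 pi (fun i j => G mu l2 l1 (l2 + l1 * p12) j i)); auto.
  intros [|a] [|b]; cbv beta iota delta [Dop]; rewrite ?G_0.
  - simpl. ring.
  - pose proof (G_S0 mu l2 l1 (l2 + l1 * p12) b) as E. assert (0 < mu + (l2 + l1*p12)) by nra.
    specialize (E H). lra.
  - simpl. ring.
  - pose proof (G_SS mu l2 l1 (l2 + l1 * p12) b a) as E. specialize (E ltac:(lra)). lra.
Qed.

Theorem theorem4 (l1 l2 mu p12 p21 r1 r2 c1 c2 h1 h2 : R)
  (Hl1 : 0 < l1) (Hl2 : 0 < l2) (Hmu : 0 < mu)
  (Hp12 : 0 <= p12 <= 1) (Hp21 : 0 <= p21 <= 1)
  (Hr1 : 0 <= r1) (Hr2 : 0 <= r2) (Hh1 : 0 <= h1) (Hh2 : 0 <= h2)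
  (Q1 Q2 : nat) (pi00 pi10 pi01 pi11 : nat -> nat -> R)
  (S00 : stationary l1 l2 mu p12 p21 Q1 Q2 pi00)
  (S10 : stationary l1 l2 mu p12 p21 (S Q1) Q2 pi10)
  (S01 : stationary l1 l2 mu p12 p21 Q1 (S Q2) pi01)
  (S11 : stationary l1 l2 mu p12 p21 (S Q1) (S Q2) pi11) :
  profit2 mu r1 r2 c1 c2 h1 h2 (S Q1) (S Q2) pi11
  - profit2 mu r1 r2 c1 c2 h1 h2 (S Q1) Q2 pi10
  - profit2 mu r1 r2 c1 c2 h1 h2 Q1 (S Q2) pi01
  + profit2 mu r1 r2 c1 c2 h1 h2 Q1 Q2 pi00 <= 0.
Proof.
  unfold profit2. pose proof Hp12 as [Hq1 Hq2]. pose proof Hp21 as [Hq3 Hq4].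
  rewrite (Em1_eq _ _ _ _ _ _ _ pi00 Hmu Hl1 Hl2 Hq3 S00), (Em1_eq _ _ _ _ _ _ _ pi10 Hmu Hl1 Hl2 Hq3 S10),
          (Em1_eq _ _ _ _ _ _ _ pi01 Hmu Hl1 Hl2 Hq3 S01), (Em1_eq _ _ _ _ _ _ _ pi11 Hmu Hl1 Hl2 Hq3 S11).
  rewrite (Em2_eq _ _ _ _ _ _ _ pi00 Hmu Hl1 Hl2 Hq1 S00), (Em2_eq _ _ _ _ _ _ _ pi10 Hmu Hl1 Hl2 Hq1 S10),
          (Em2_eq _ _ _ _ _ _ _ pi01 Hmu Hl1 Hl2 Hq1 S01), (Em2_eq _ _ _ _ _ _ _ pi11 Hmu Hl1 Hl2 Hq1 S11).
  pose proof (G_supermod mu l1 l2 (l1 + l2 * p21) Hmu Hl1 Hl2 ltac:(destruct Hp21; nra) Q1 Q2) as X.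
  pose proof (G_supermod mu l2 l1 (l2 + l1 * p12) Hmu Hl2 Hl1 ltac:(destruct Hp12; nra) Q2 Q1) as Y.
  set (x := G mu l1 l2 (l1 + l2 * p21) (S Q1) (S Q2) - G mu l1 l2 (l1 + l2 * p21) (S Q1) Q2
       - G mu l1 l2 (l1 + l2 * p21) Q1 (S Q2) + G mu l1 l2 (l1 + l2 * p21) Q1 Q2) in X.
  set (y := G mu l2 l1 (l2 + l1 * p12) (S Q2) (S Q1) - G mu l2 l1 (l2 + l1 * p12) (S Q2) Q1
       - G mu l2 l1 (l2 + l1 * p12) Q2 (S Q1) + G mu l2 l1 (l2 + l1 * p12) Q2 Q1) in Y.
  match goal with |- ?L <= 0 => replace L with (- (mu * (r1 + h1) * x + mu * (r2 + h2) * y))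
    by (unfold x, y; ring) end.
  assert (0 <= mu * (r1 + h1) * x) by (apply Rmult_le_pos; [apply Rmult_le_pos|]; lra).
  assert (0 <= mu * (r2 + h2) * y) by (apply Rmult_le_pos; [apply Rmult_le_pos|]; lra).
  lra.
Qed.
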